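(* Let $A$ be the weighted shift on $\mathcal{H}$ with weights $\{1/n\}_{n\ge1}$. Then for every $r\ge0$, \[\lim_{z\to0}\frac{\ln\|(z-rA)^{-1}\|}{\ln\|(z-A)^{-1}\|}=r.\]
   Context: $\mathcal{H}$ is a separable infinite-dimensional complex Hilbert space with orthonormal basis $\{e_n\}_{n=0}^\infty$, and $A$ is defined by $Ae_n=\frac{1}{n+1}e_{n+1}$ for $n\ge0$. $A$ is quasinilpotent, and $z$ ranges over nonzero complex numbers. *)

(* Defs.v *)
From Stdlib Require Import Reals ClassicalEpsilon.
From Coquelicot Require Import Coquelicot.
Open Scope R_scope.

(* Concrete model of H = l^2(N; C) with orthonormal basis e_n = indicator of n. *)
Definition vec := nat -> C.

Definition l2 (x : vec) : Prop := ex_series (fun n => (Cmod (x n)) ^ 2).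

Definition l2norm (x : vec) : R := sqrt (Series (fun n => (Cmod (x n)) ^ 2)).

(* Operators are maps vec -> vec; only their action on l2 matters. *)
Definition op := vec -> vec.

(* The weighted shift: A e_n = e_{n+1}/(n+1), i.e. (A x)_0 = 0 and
   (A x)_{m+1} = x_m / (m+1). *)
Definition A : op := fun x m =>
  match m with
  | O => RtoC 0
  | S k => Cdiv (x k) (RtoC (INR (S k)))
  end.

Definition zsub (z : C) (r : R) (T : op) : op :=
  fun x n => Cminus (Cmult z (x n)) (Cmult (RtoC r) (T x n)).

Definition bounded_linear (S : op) : Prop :=
  (forall x, l2 x -> l2 (S x)) /\
  (forall x y, l2 x -> l2 y -> forall n, S (fun k => Cplus (x k) (y k)) n = Cplus (S x n) (S y n)) /\
  (forall (c : C) x, l2 x -> forall n, S (fun k => Cmult c (x k)) n = Cmult c (S x n)) /\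
  (exists M : R, forall x, l2 x -> l2norm (S x) <= M * l2norm x).

Definition is_inverse (T S : op) : Prop :=
  bounded_linear S /\
  (forall x, l2 x -> T (S x) = x) /\
  (forall x, l2 x -> S (T x) = x).

(* The inverse of T (chosen; unique whenever it exists). *)
Definition inverse (T : op) : op :=
  epsilon (inhabits (fun x : vec => x)) (is_inverse T).

Definition opnorm (S : op) : R :=
  real (Lub_Rbar (fun y => exists x, l2 x /\ l2norm x <= 1 /\ y = l2norm (S x))).

(* Main.v *)
Require Import Defs.
From Stdlib Require Import Reals Lra Lia Psatz ZArith ClassicalEpsilon FunctionalExtensionality.
From Coquelicot Require Import Coquelicot.
Open Scope R_scope.

Lemma sum_incr (a : nat -> R) : (forall n, 0 <= a n) ->
  forall n, sum_n a n <= sum_n a (S n).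
Proof.
  intros H n. rewrite !sum_n_Reals. rewrite tech5. specialize (H (S n)). lra.
Qed.

Lemma series_bounded (a : nat -> R) (B : R) : (forall n, 0 <= a n) ->
  (forall N, sum_f_R0 a N <= B) -> ex_series a /\ Series a <= B.
Proof.
  intros Hp HB.
  assert (Hex : ex_lim_seq (sum_n a)) by (apply ex_lim_seq_incr; apply sum_incr; auto).
  assert (Hle : Rbar_le (Lim_seq (sum_n a)) B).
  { rewrite <- (Lim_seq_const B). apply Lim_seq_le_loc. exists O. intros n _.
    rewrite sum_n_Reals. auto. }
  assert (Hge : Rbar_le 0 (Lim_seq (sum_n a))).
  { rewrite <- (Lim_seq_const 0). apply Lim_seq_le_loc. exists O. intros n _.
    rewrite sum_n_Reals. apply cond_pos_sum. auto. }
  destruct (Lim_seq (sum_n a)) eqn:E; simpl in Hle, Hge; try contradiction.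
  split.
  - exists r. unfold is_series. apply Lim_seq_correct in Hex. rewrite E in Hex. exact Hex.
  - unfold Series. rewrite E. simpl. exact Hle.
Qed.

Lemma partial_le_series (a : nat -> R) : (forall n, 0 <= a n) -> ex_series a ->
  forall N, sum_f_R0 a N <= Series a.
Proof.
  intros Hp [l Hl] N. rewrite (is_series_unique a l Hl).
  rewrite <- sum_n_Reals. apply (is_lim_seq_incr_compare (sum_n a) l Hl).
  apply sum_incr; auto.
Qed.

Lemma term_le_sum (a : nat -> R) : (forall n, 0 <= a n) -> forall k, a k <= sum_f_R0 a k.
Proof.
  intros Hp [|k]; simpl. lra. pose proof (cond_pos_sum a k Hp). lra.
Qed.

Lemma sum_rev (f : nat -> R) n : sum_f_R0 (fun j => f (n - j)%nat) n = sum_f_R0 f n.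
Proof.
  induction n. simpl. reflexivity.
  rewrite decomp_sum by lia. simpl pred. rewrite tech5.
  replace (S n - 0)%nat with (S n) by lia.
  rewrite (sum_eq _ (fun j => f (n - j)%nat)) by (intros; reflexivity).
  rewrite IHn. lra.
Qed.

Lemma cs_sum (w a : nat -> R) n : (forall j, 0 <= w j) ->
  (sum_f_R0 (fun j => w j * a j) n)^2 <=
  sum_f_R0 w n * sum_f_R0 (fun j => w j * a j ^ 2) n.
Proof.
  intros Hw. induction n.
  - simpl. specialize (Hw O). nra.
  - rewrite !tech5. set (S1 := sum_f_R0 (fun j => w j * a j) n) in *.
    set (W := sum_f_R0 w n) in *.
    set (Q := sum_f_R0 (fun j => w j * a j ^ 2) n) in *.
    assert (HW : 0 <= W) by (apply cond_pos_sum; auto).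
    assert (HQ : 0 <= Q) by (apply cond_pos_sum; intros; pose proof (Hw n0); pose proof (pow2_ge_0 (a n0)); nra).
    pose proof (Hw (S n)) as Hw'.
    set (w' := w (S n)) in *. set (a' := a (S n)).
    assert (Key : 2 * a' * S1 <= W * a'^2 + Q).
    { assert (H1 : (2*a'*S1)^2 <= (W*a'^2+Q)^2).
      { pose proof (pow2_ge_0 (W*a'^2 - Q)). pose proof (pow2_ge_0 a').
        assert (a'^2 * S1^2 <= a'^2 * (W*Q)) by (apply Rmult_le_compat_l; auto).
        nra. }
      assert (0 <= W*a'^2+Q) by (pose proof (pow2_ge_0 a'); nra).
      destruct (Rle_dec (2 * a' * S1) (W * a'^2 + Q)) as [h|h]; auto.
      exfalso. apply Rnot_le_lt in h. nra. }
    assert (w' * (2 * a' * S1) <= w' * (W * a'^2 + Q)) by (apply Rmult_le_compat_l; auto).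
    nra.
Qed.
Lemma sum_swap (g f : nat -> R) N :
  sum_f_R0 (fun n => sum_f_R0 (fun j => g (n - j)%nat * f j) n) N =
  sum_f_R0 (fun j => f j * sum_f_R0 g (N - j)) N.
Proof.
  induction N.
  - simpl. lra.
  - rewrite tech5. rewrite IHN. rewrite (tech5 (fun j => f j * sum_f_R0 g (S N - j))).
    rewrite (tech5 (fun j => g (S N - j)%nat * f j)).
    replace (S N - S N)%nat with O by lia.
    rewrite (sum_eq (fun j => f j * sum_f_R0 g (S N - j))
                    (fun j => f j * sum_f_R0 g (N - j) + g (S N - j)%nat * f j)).
    + rewrite plus_sum. simpl. lra.
    + intros i Hi. replace (S N - i)%nat with (S (N - i)) by lia. rewrite tech5. ring.
Qed.

Fixpoint resf (z : C) (r : R) (x : vec) (n : nat) : C :=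
  match n with
  | O => Cdiv (x O) z
  | S m => Cdiv (Cplus (x (S m)) (Cmult (RtoC r) (Cdiv (resf z r x m) (RtoC (INR (S m)))))) z
  end.

Lemma RtoC_INR_neq n : RtoC (INR (S n)) <> RtoC 0.
Proof. intro H. apply (f_equal fst) in H. change (INR (S n) = 0) in H. pose proof (pos_INR n). revert H. rewrite S_INR. lra. Qed.

Lemma zsub_res z r x : z <> RtoC 0 -> zsub z r A (resf z r x) = x.
Proof.
  intros Hz. apply functional_extensionality. intros [|m]; unfold zsub, A; cbn [resf].
  - field. exact Hz.
  - pose proof (RtoC_INR_neq m). field. split; auto.
Qed.

Lemma res_zsub z r x : z <> RtoC 0 -> resf z r (zsub z r A x) = x.
Proof.
  intros Hz. apply functional_extensionality. intros n. induction n.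
  - simpl. unfold zsub, A. field. exact Hz.
  - cbn [resf]. rewrite IHn. unfold zsub, A. pose proof (RtoC_INR_neq n). field. split; auto.
Qed.

Lemma res_add z r x y n : resf z r (fun k => Cplus (x k) (y k)) n = Cplus (resf z r x n) (resf z r y n).
Proof.
  induction n; cbn [resf]. 
  - unfold Cdiv. ring.
  - rewrite IHn. unfold Cdiv. ring.
Qed.

Lemma res_scal z r c x n : resf z r (fun k => Cmult c (x k)) n = Cmult c (resf z r x n).
Proof.
  induction n; cbn [resf].
  - unfold Cdiv. ring.
  - rewrite IHn. unfold Cdiv. ring.
Qed.

Fixpoint bseq (s r : R) (a : nat -> R) (n : nat) : R :=
  match n with
  | O => s * a O
  | S m => s * (a (S m) + r * bseq s r a m / INR (S m))
  end.

Definition cc (u : R) (k : nat) : R := u ^ k / INR (Factorial.fact k).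

Lemma cc_pos u k : 0 <= u -> 0 <= cc u k.
Proof. intros. unfold cc. apply Rmult_le_pos. apply pow_le; auto.
  apply Rlt_le, Rinv_0_lt_compat, lt_0_INR, Factorial.lt_O_fact. Qed.

Lemma cc_S u k : cc u (S k) = cc u k * (u / INR (S k)).
Proof. unfold cc. rewrite fact_simpl, mult_INR. simpl pow.
  pose proof (lt_0_INR _ (Factorial.lt_O_fact k)). pose proof (lt_0_INR (S k) ltac:(lia)). field. lra. Qed.

Lemma Cmod_RtoC_pos r : 0 <= r -> Cmod (RtoC r) = r.
Proof. intros. rewrite Cmod_R. apply Rabs_pos_eq; auto. Qed.

Lemma res_le_b z r x n : z <> RtoC 0 -> 0 <= r ->
  Cmod (resf z r x n) <= bseq (/ Cmod z) r (fun k => Cmod (x k)) n.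
Proof.
  intros Hz Hr. assert (Hm : 0 < Cmod z) by (apply Cmod_gt_0; auto).
  induction n; cbn [resf bseq].
  - rewrite Cmod_div by auto. unfold Rdiv. lra.
  - rewrite Cmod_div by auto.
    pose proof (Cmod_triangle (x (S n)) (RtoC r * (resf z r x n / RtoC (INR (S n))))).
    rewrite Cmod_mult, Cmod_div, !Cmod_RtoC_pos in H by (auto using RtoC_INR_neq, pos_INR).
    assert (0 < INR (S n)) by (apply lt_0_INR; lia).
    assert (r * (Cmod (resf z r x n) / INR (S n)) <= r * bseq (/ Cmod z) r (fun k => Cmod (x k)) n / INR (S n)).
    { unfold Rdiv. rewrite <- Rmult_assoc. apply Rmult_le_compat_r. apply Rlt_le, Rinv_0_lt_compat; auto.
      apply Rmult_le_compat_l; auto. }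
    unfold Rdiv. rewrite Rmult_comm. apply Rmult_le_compat_l. apply Rlt_le, Rinv_0_lt_compat; auto.
    unfold Rdiv in *. lra.
Qed.

Lemma b_le_conv s r a n : 0 <= s -> 0 <= r -> (forall k, 0 <= a k) ->
  bseq s r a n <= s * sum_f_R0 (fun j => cc (r * s) (n - j) * a j) n.
Proof.
  intros Hs Hr Ha. induction n; cbn [bseq].
  - simpl. unfold cc. simpl. lra.
  - rewrite tech5. replace (S n - S n)%nat with O by lia.
    assert (0 < INR (S n)) by (apply lt_0_INR; lia).
    assert (Hc : sum_f_R0 (fun j => cc (r * s) (n - j) * a j) n * (r * s / INR (S n)) <=
                 sum_f_R0 (fun j => cc (r * s) (S n - j) * a j) n).
    { rewrite Rmult_comm, scal_sum. apply sum_Rle. intros j Hj.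
      replace (S n - j)%nat with (S (n - j)) by lia. rewrite cc_S.
      pose proof (Ha j). pose proof (cc_pos (r*s) (n-j) ltac:(nra)).
      assert (r * s / INR (S n) <= r * s / INR (S (n - j))).
      { unfold Rdiv. apply Rmult_le_compat_l. nra. apply Rinv_le_contravar.
        apply lt_0_INR; lia. apply le_INR; lia. }
      assert (0 <= cc (r * s) (n - j) * a j) by nra.
      nra. }
    assert (r * bseq s r a n / INR (S n) <= r * (s * sum_f_R0 (fun j => cc (r * s) (n - j) * a j) n) / INR (S n)).
    { unfold Rdiv. apply Rmult_le_compat_r. apply Rlt_le, Rinv_0_lt_compat; auto.
      apply Rmult_le_compat_l; auto. }
    replace (r * (s * sum_f_R0 (fun j => cc (r * s) (n - j) * a j) n) / INR (S n)) with
       (sum_f_R0 (fun j => cc (r * s) (n - j) * a j) n * (r * s / INR (S n))) in H0 by (field; lra).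
    replace (cc (r*s) 0) with 1 by (unfold cc; simpl; field).
    apply Rmult_le_compat_l; auto. lra.
Qed.

Lemma sum_cc_le u n : 0 <= u -> sum_f_R0 (cc u) n <= exp u.
Proof. intros. unfold cc. apply exp_ge_taylor; auto. Qed.

Lemma partial_bound z r x N : z <> RtoC 0 -> 0 <= r ->
  sum_f_R0 (fun n => Cmod (resf z r x n) ^ 2) N <=
  (/ Cmod z * exp (r * / Cmod z)) ^ 2 * sum_f_R0 (fun j => Cmod (x j) ^ 2) N.
Proof.
  intros Hz Hr. assert (Hm : 0 < Cmod z) by (apply Cmod_gt_0; auto).
  set (s := / Cmod z). assert (Hs : 0 < s) by (apply Rinv_0_lt_compat; auto).
  set (u := r * s). assert (Hu : 0 <= u) by (unfold u; nra).
  set (E := exp u). assert (HE : 0 < E) by apply exp_pos.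
  set (a := fun k => Cmod (x k)). assert (Ha : forall k, 0 <= a k) by (intros; apply Cmod_ge_0).
  assert (Hterm : forall n, Cmod (resf z r x n) ^ 2 <=
            s ^ 2 * E * sum_f_R0 (fun j => cc u (n - j) * a j ^ 2) n).
  { intros n.
    pose proof (res_le_b z r x n Hz Hr) as H1. fold s in H1.
    pose proof (b_le_conv s r a n (Rlt_le _ _ Hs) Hr Ha) as H2. fold u in H2.
    pose proof (cs_sum (fun j => cc u (n - j)) a n (fun j => cc_pos u _ Hu)) as H3.
    rewrite (sum_rev (cc u) n) in H3.
    pose proof (sum_cc_le u n Hu) as H4. fold E in H4.
    assert (0 <= sum_f_R0 (fun j => cc u (n - j) * a j ^ 2) n).
    { apply cond_pos_sum. intros. pose proof (cc_pos u (n - n0) Hu). pose proof (pow2_ge_0 (a n0)). nra. }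
    assert (0 <= sum_f_R0 (fun j => cc u (n - j) * a j) n).
    { apply cond_pos_sum. intros. pose proof (cc_pos u (n - n0) Hu). pose proof (Ha n0). nra. }
    pose proof (Cmod_ge_0 (resf z r x n)).
    set (C1 := sum_f_R0 (fun j => cc u (n - j) * a j) n) in *.
    set (Q := sum_f_R0 (fun j => cc u (n - j) * a j ^ 2) n) in *.
    assert (Cmod (resf z r x n) <= s * C1) by (unfold a in *; lra).
    assert (Cmod (resf z r x n) ^ 2 <= (s * C1) ^ 2) by (apply pow_incr; lra).
    assert (sum_f_R0 (cc u) n * Q <= E * Q) by (apply Rmult_le_compat_r; auto).
    assert (s^2 * C1^2 <= s^2 * (E * Q)) by (apply Rmult_le_compat_l; [nra| lra]).
    nra. }
  eapply Rle_trans. apply sum_Rle. intros n _. apply Hterm.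
  rewrite (sum_eq _ (fun n => sum_f_R0 (fun j => cc u (n - j) * a j ^ 2) n * (s ^ 2 * E))) by (intros; ring).
  rewrite <- scal_sum.
  pose proof (sum_swap (cc u) (fun j => a j ^ 2) N) as SW. cbv beta in SW. rewrite SW.
  assert (sum_f_R0 (fun j => a j ^ 2 * sum_f_R0 (cc u) (N - j)) N <= E * sum_f_R0 (fun j => a j ^ 2) N).
  { rewrite scal_sum. apply sum_Rle. intros j _. pose proof (sum_cc_le u (N - j) Hu).
    pose proof (pow2_ge_0 (a j)). fold E in H. nra. }
  assert (s ^ 2 * E * sum_f_R0 (fun j => a j ^ 2 * sum_f_R0 (cc u) (N - j)) N <=
          s ^ 2 * E * (E * sum_f_R0 (fun j => a j ^ 2) N)).
  { apply Rmult_le_compat_l; auto. nra. }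
  unfold a in *. replace ((s * E) ^ 2) with (s ^ 2 * E * E) by ring. lra.
Qed.

Lemma res_bound z r x : z <> RtoC 0 -> 0 <= r -> l2 x ->
  l2 (resf z r x) /\
  l2norm (resf z r x) <= (/ Cmod z * exp (r * / Cmod z)) * l2norm x.
Proof.
  intros Hz Hr Hx.
  assert (Hm : 0 < Cmod z) by (apply Cmod_gt_0; auto).
  set (K := / Cmod z * exp (r * / Cmod z)).
  assert (HK : 0 <= K) by (unfold K; apply Rmult_le_pos; [apply Rlt_le, Rinv_0_lt_compat; auto | apply Rlt_le, exp_pos]).
  assert (Hp : forall n, 0 <= Cmod (x n) ^ 2) by (intros; apply pow2_ge_0).
  destruct (series_bounded (fun n => Cmod (resf z r x n) ^ 2) (K ^ 2 * Series (fun n => Cmod (x n) ^ 2)))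
    as [Hex Hle].
  - intros; apply pow2_ge_0.
  - intros N. eapply Rle_trans. apply partial_bound; auto. fold K.
    apply Rmult_le_compat_l. apply pow2_ge_0. apply partial_le_series; auto.
  - split. exact Hex. unfold l2norm.
    assert (0 <= Series (fun n => Cmod (x n) ^ 2)).
    { eapply Rle_trans. 2: apply (partial_le_series _ Hp Hx O). exact (Hp O). }
    eapply Rle_trans. apply sqrt_le_1_alt. exact Hle.
    rewrite sqrt_mult_alt by apply pow2_ge_0. rewrite sqrt_pow2 by auto. lra.
Qed.

Lemma res_inverse z r : z <> RtoC 0 -> 0 <= r -> is_inverse (zsub z r A) (resf z r).
Proof.
  intros Hz Hr. split; [|split].
  - split; [|split; [|split]].
    + intros x Hx. apply (res_bound z r x Hz Hr Hx).
    + intros x y _ _ n. apply res_add.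
    + intros c x _ n. apply res_scal.
    + exists (/ Cmod z * exp (r * / Cmod z)). intros x Hx. apply (res_bound z r x Hz Hr Hx).
  - intros x _. apply zsub_res; auto.
  - intros x _. apply res_zsub; auto.
Qed.

Lemma inverse_eq z r x : z <> RtoC 0 -> 0 <= r -> l2 x -> inverse (zsub z r A) x = resf z r x.
Proof.
  intros Hz Hr Hx.
  assert (Hi : is_inverse (zsub z r A) (inverse (zsub z r A))).
  { unfold inverse. apply epsilon_spec. exists (resf z r). apply res_inverse; auto. }
  destruct Hi as [_ [_ H2]].
  rewrite <- (zsub_res z r x Hz) at 1. apply H2. apply (res_bound z r x Hz Hr Hx).
Qed.

Definition e0 : vec := fun n => match n with O => RtoC 1 | S _ => RtoC 0 end.

Lemma e0_l2 : l2 e0 /\ l2norm e0 <= 1.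
Proof.
  assert (Hs : forall N, sum_f_R0 (fun n => Cmod (e0 n) ^ 2) N <= 1).
  { induction N. simpl. rewrite Cmod_1. lra. rewrite tech5. simpl e0. rewrite Cmod_0. lra. }
  destruct (series_bounded _ 1 (fun n => pow2_ge_0 _) Hs) as [H1 H2].
  split; auto. unfold l2norm. rewrite <- sqrt_1. apply sqrt_le_1_alt. auto.
Qed.

Lemma opnorm_bounds z r : z <> RtoC 0 -> 0 <= r ->
  l2norm (resf z r e0) <= opnorm (inverse (zsub z r A)) <= / Cmod z * exp (r * / Cmod z).
Proof.
  intros Hz Hr.
  set (K := / Cmod z * exp (r * / Cmod z)).
  assert (Hm : 0 < Cmod z) by (apply Cmod_gt_0; auto).
  assert (HK : 0 <= K) by (unfold K; apply Rmult_le_pos; [apply Rlt_le, Rinv_0_lt_compat; auto | apply Rlt_le, exp_pos]).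
  unfold opnorm.
  set (Eset := fun y => exists x, l2 x /\ l2norm x <= 1 /\ y = l2norm (inverse (zsub z r A) x)).
  destruct (Lub_Rbar_correct Eset) as [Hub Hleast].
  assert (Hup : Rbar_le (Lub_Rbar Eset) K).
  { apply Hleast. intros y [x [Hx [Hn ->]]]. rewrite inverse_eq by auto.
    destruct (res_bound z r x Hz Hr Hx) as [_ Hb]. fold K in Hb.
    simpl. assert (K * l2norm x <= K * 1) by (apply Rmult_le_compat_l; auto). lra. }
  assert (Hlo : Rbar_le (l2norm (resf z r e0)) (Lub_Rbar Eset)).
  { apply Hub. exists e0. destruct e0_l2 as [H1 H2]. split; auto. split; auto.
    rewrite inverse_eq; auto. }
  destruct (Lub_Rbar Eset); simpl in *; try contradiction. split; auto.
Qed.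

Lemma floor_ex u : 0 <= u -> exists k : nat, INR k <= u < INR k + 1.
Proof.
  intros Hu. destruct (base_Int_part u) as [H1 H2].
  assert (Hz : (0 <= Int_part u)%Z).
  { apply le_IZR. assert (IZR (Int_part u) > -1) by lra.
    destruct (Z_lt_le_dec (Int_part u) 0) as [h|h]; [|apply IZR_le in h; lra].
    assert (Int_part u <= -1)%Z by lia. apply IZR_le in H0. lra. }
  exists (Z.to_nat (Int_part u)). rewrite INR_IZR_INZ, Znat.Z2Nat.id by auto. lra.
Qed.

Lemma res_e0 z r k : z <> RtoC 0 -> 0 <= r ->
  Cmod (resf z r e0 k) = / Cmod z * cc (r * / Cmod z) k.
Proof.
  intros Hz Hr. assert (Hm : 0 < Cmod z) by (apply Cmod_gt_0; auto).
  induction k; cbn [resf].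
  - rewrite Cmod_div by auto. simpl e0. rewrite Cmod_1. unfold cc. simpl. field. lra.
  - simpl e0. rewrite Cplus_0_l. rewrite Cmod_div by auto.
    rewrite Cmod_mult, Cmod_div, !Cmod_RtoC_pos by (auto using RtoC_INR_neq, pos_INR).
    rewrite IHk, cc_S. assert (0 < INR (S k)) by (apply lt_0_INR; lia). field. lra.
Qed.

Lemma cmod_le_l2norm y k : l2 y -> Cmod (y k) <= l2norm y.
Proof.
  intros Hy. unfold l2norm.
  assert (Hp : forall n, 0 <= Cmod (y n) ^ 2) by (intros; apply pow2_ge_0).
  rewrite <- (sqrt_pow2 (Cmod (y k))) by apply Cmod_ge_0.
  apply sqrt_le_1_alt. eapply Rle_trans. apply (term_le_sum _ Hp k).
  apply partial_le_series; auto.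
Qed.

Lemma ln_step k : (1 <= k)%nat -> 1 <= (INR k + 1) * (ln (INR k + 1) - ln (INR k)).
Proof.
  intros Hk. assert (H0 : 1 <= INR k) by (apply (le_INR 1); auto).
  pose proof (exp_ineq1_le (- / (INR k + 1))).
  assert (INR k / (INR k + 1) <= exp (- / (INR k + 1))).
  { replace (INR k / (INR k + 1)) with (1 + - / (INR k + 1)) by (field; lra). auto. }
  apply ln_le in H1. rewrite ln_exp, ln_div in H1 by lra.
  2: { apply Rdiv_lt_0_compat; lra. }
  assert (0 < INR k + 1) by lra.
  apply (Rmult_le_compat_l (INR k + 1)) in H1; [|lra].
  replace ((INR k + 1) * - / (INR k + 1)) with (-1) in H1 by (field; lra). nra.
Qed.

Lemma stirling k : (1 <= k)%nat ->
  ln (INR (Factorial.fact k)) <= INR k * ln (INR k) - INR k + 1 + ln (INR k).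
Proof.
  intros Hk. induction k. lia.
  destruct k. simpl. rewrite ln_1. lra.
  specialize (IHk ltac:(lia)).
  rewrite fact_simpl, mult_INR, ln_mult.
  2: { apply lt_0_INR; lia. } 2: { apply lt_0_INR, Factorial.lt_O_fact. }
  pose proof (ln_step (S k) ltac:(lia)). rewrite <- S_INR in H.
  set (kr := INR (S k)) in *. rewrite (S_INR (S k)). fold kr.
  rewrite S_INR in H. fold kr in H. set (L := ln (kr + 1)) in *. set (L0 := ln kr) in *. nra.
Qed.

Lemma cc_pos_strict u k : 0 < u -> 0 < cc u k.
Proof. intros. unfold cc. apply Rdiv_lt_0_compat. apply pow_lt; auto. apply lt_0_INR, Factorial.lt_O_fact. Qed.

Lemma cc_lower u : 1 <= u -> exists k, u - 2 - ln u <= ln (cc u k).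
Proof.
  intros Hu. destruct (floor_ex u ltac:(lra)) as [k [Hk1 Hk2]].
  assert (Hk : (1 <= k)%nat).
  { destruct k. simpl in Hk2. lra. lia. }
  assert (Hkr : 1 <= INR k) by (apply (le_INR 1); auto).
  exists k. unfold cc. rewrite ln_div.
  2: { apply pow_lt; lra. } 2: { apply lt_0_INR, Factorial.lt_O_fact. }
  rewrite Rpower.ln_pow by lra.
  pose proof (stirling k Hk).
  assert (ln (INR k) <= ln u) by (apply ln_le; lra).
  assert (INR k * ln (INR k) <= INR k * ln u) by (apply Rmult_le_compat_l; lra).
  lra.
Qed.

Lemma lnN_bounds r : 0 <= r -> exists c s0, 0 <= c /\ 1 <= s0 /\
  forall z, z <> RtoC 0 -> s0 <= / Cmod z ->
    r * / Cmod z - c <= ln (opnorm (inverse (zsub z r A))) <= r * / Cmod z + ln (/ Cmod z).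
Proof.
  intros Hr.
  assert (Gen : forall z, z <> RtoC 0 -> 
     / Cmod z * (r * / Cmod z) ^ 0 / 1 <= opnorm (inverse (zsub z r A)) /\
     (forall k, / Cmod z * cc (r * / Cmod z) k <= opnorm (inverse (zsub z r A))) /\
     ln (opnorm (inverse (zsub z r A))) <= r * / Cmod z + ln (/ Cmod z)).
  { intros z Hz. assert (Hm : 0 < Cmod z) by (apply Cmod_gt_0; auto).
    assert (Hs : 0 < / Cmod z) by (apply Rinv_0_lt_compat; auto).
    destruct (opnorm_bounds z r Hz Hr) as [L U].
    destruct (res_bound z r e0 Hz Hr (proj1 e0_l2)) as [Hl2 _].
    assert (Hk : forall k, / Cmod z * cc (r * / Cmod z) k <= opnorm (inverse (zsub z r A))).
    { intros k. rewrite <- res_e0 by auto. eapply Rle_trans. apply cmod_le_l2norm; auto. auto. }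
    assert (H0 : / Cmod z * (r * / Cmod z) ^ 0 / 1 <= opnorm (inverse (zsub z r A))).
    { pose proof (Hk O). unfold cc in H. simpl in H |- *. lra. }
    split; auto. split; auto.
    eapply Rle_trans. apply ln_le. simpl in H0. lra. exact U.
    rewrite ln_mult, ln_exp by (auto; apply exp_pos). lra. }
  destruct (Req_dec r 0) as [Hr0 | Hr0].
  - exists 0, 1. split. lra. split. lra. intros z Hz Hs.
    destruct (Gen z Hz) as [H0 [_ H2]]. split; auto.
    assert (0 <= ln (/ Cmod z)) by (rewrite <- ln_1; apply ln_le; lra).
    assert (Hm : 0 < Cmod z) by (apply Cmod_gt_0; auto).
    assert (0 < / Cmod z) by (apply Rinv_0_lt_compat; auto).
    subst r. simpl in H0. replace (/ Cmod z * 1 / 1) with (/ Cmod z) in H0 by (field; lra).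
    assert (ln (/ Cmod z) <= ln (opnorm (inverse (zsub z 0 A)))) by (apply ln_le; auto).
    lra.
  - assert (Hrp : 0 < r) by lra.
    exists (2 + Rabs (ln r)), (Rmax 1 (/ r)). split. pose proof (Rabs_pos (ln r)). lra.
    split. apply Rmax_l. intros z Hz Hs.
    assert (Hm : 0 < Cmod z) by (apply Cmod_gt_0; auto).
    set (s := / Cmod z) in *. assert (Hs0 : 0 < s) by (apply Rinv_0_lt_compat; auto).
    destruct (Gen z Hz) as [_ [Hk H2]]. split; auto.
    assert (Hu : 1 <= r * s).
    { pose proof (Rmax_r 1 (/ r)). assert (/ r <= s) by lra.
      apply (Rmult_le_compat_l r) in H0; [|lra]. rewrite Rinv_r in H0; lra. }
    destruct (cc_lower (r * s) Hu) as [k Hck].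
    specialize (Hk k). fold s in Hk.
    pose proof (cc_pos_strict (r * s) k ltac:(nra)).
    apply ln_le in Hk; [|nra]. rewrite ln_mult in Hk by lra.
    rewrite ln_mult in Hck by lra.
    pose proof (Rle_abs (ln r)). pose proof (Rle_abs (- ln r)). rewrite Rabs_Ropp in H1. lra.
Qed.

Lemma ln_le_2sqrt s : 0 < s -> ln s <= 2 * sqrt s.
Proof.
  intros Hs. assert (Ht : 0 < sqrt s) by (apply sqrt_lt_R0; auto).
  replace s with (sqrt s * sqrt s) at 1 by (apply sqrt_sqrt; lra).
  rewrite ln_mult by auto. pose proof (exp_ineq1_le (ln (sqrt s))). rewrite exp_ln in H by auto. lra.
Qed.

Theorem lemma3p5 (r : R) (hr : 0 <= r) :
  forall eps : R, 0 < eps ->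
  exists delta : R, 0 < delta /\
    forall z : C, z <> RtoC 0 -> Cmod z < delta ->
      Rabs (ln (opnorm (inverse (zsub z r A))) / ln (opnorm (inverse (zsub z 1 A))) - r) < eps.
Proof.
  intros eps Heps.
  destruct (lnN_bounds r hr) as [c [s0 [Hc [Hs0 Hb]]]].
  destruct (lnN_bounds 1 ltac:(lra)) as [c1 [s1 [Hc1 [Hs1 Hb1]]]].
  set (K := r * c1 + c). assert (HK : 0 <= K) by (unfold K; nra).
  set (T := 8 * (1 + r) / eps). assert (HT : 0 < T) by (unfold T; apply Rdiv_lt_0_compat; lra).
  set (S := Rmax (Rmax s0 s1) (Rmax (2 * c1) (Rmax (4 * K / eps) (T * T)))).
  assert (HS1 : s0 <= S /\ s1 <= S /\ 2 * c1 <= S /\ 4 * K / eps <= S /\ T * T <= S).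
  { unfold S. repeat split.
    - eapply Rle_trans; [apply Rmax_l|]. apply Rmax_l.
    - eapply Rle_trans; [apply Rmax_r|]. apply Rmax_l.
    - eapply Rle_trans; [apply Rmax_l|]. apply Rmax_r.
    - eapply Rle_trans; [|apply Rmax_r]. eapply Rle_trans; [|apply Rmax_r]. apply Rmax_l.
    - eapply Rle_trans; [|apply Rmax_r]. eapply Rle_trans; [|apply Rmax_r]. apply Rmax_r. }
  destruct HS1 as [HS0 [HS1' [HS2 [HS3 HS4]]]].
  assert (HSpos : 1 <= S) by lra.
  exists (/ (S + 1)). split. apply Rinv_0_lt_compat; lra.
  intros z Hz Hzd.
  assert (Hm : 0 < Cmod z) by (apply Cmod_gt_0; auto).
  set (s := / Cmod z).
  assert (Hss : S + 1 < s).
  { unfold s. rewrite <- (Rinv_inv (S + 1)). apply Rinv_lt_contravar; auto.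
    apply Rmult_lt_0_compat; auto. apply Rinv_0_lt_compat; lra. }
  destruct (Hb z Hz ltac:(fold s; lra)) as [N1 N2].
  destruct (Hb1 z Hz ltac:(fold s; lra)) as [D1 D2]. fold s in N1, N2, D1, D2.
  set (N := ln (opnorm (inverse (zsub z r A)))) in *.
  set (D := ln (opnorm (inverse (zsub z 1 A)))) in *.
  assert (Hspos : 0 < s) by lra.
  pose proof (ln_le_2sqrt s Hspos) as Hln.
  assert (Hln0 : 0 <= ln s) by (rewrite <- ln_1; apply ln_le; lra).
  set (t := sqrt s) in *.
  assert (Ht2 : t * t = s) by (apply sqrt_sqrt; lra).
  assert (Ht : 0 <= t) by apply sqrt_pos.
  assert (HD : s / 2 <= D) by lra.
  assert (Hbound : Rabs (N - r * D) <= K + 2 * (1 + r) * t).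
  { apply Rabs_le. unfold K. split; nra. }
  assert (E1 : 4 * K < eps * s).
  { assert (4 * K / eps < s) by lra. apply (Rmult_lt_compat_l eps) in H; auto.
    replace (eps * (4 * K / eps)) with (4 * K) in H by (field; lra). lra. }
  assert (E2 : 8 * (1 + r) < eps * t).
  { assert (T < t).
    { destruct (Rlt_le_dec T t) as [h|h]; auto. assert (t * t <= T * T) by nra. lra. }
    apply (Rmult_lt_compat_l eps) in H; auto. unfold T in H.
    replace (eps * (8 * (1 + r) / eps)) with (8 * (1 + r)) in H by (field; lra). lra. }
  assert (E3 : 8 * (1 + r) * t <= eps * t * t) by nra.
  assert (Hlt : Rabs (N - r * D) < eps * D) by nra.
  assert (HDp : 0 < D) by lra.
  replace (N / D - r) with ((N - r * D) / D) by (field; lra).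
  unfold Rdiv. rewrite Rabs_mult, Rabs_inv, (Rabs_pos_eq D) by lra.
  apply (Rmult_lt_reg_r D); auto. rewrite Rmult_assoc, Rinv_l by lra. lra.
Qed.
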